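(* Suppose $m=0$ (purely deterministic problem). Then for every integer $k\ge1$ and $\tau\in T$: if $\mathfrak{h}(\tau)=k$ then $\rho(\tau)\ge k$; if $\mathfrak{r}(\tau)=k$ then $\rho(\tau)\ge2k-1$; if $\mathfrak{d}(\tau)=k$ then $\rho(\tau)\ge2^k-1$. The same holds for $u\in U_f$ with $\mathfrak{h}',\mathfrak{r}',\mathfrak{d}'$ in place of $\mathfrak{h},\mathfrak{r},\mathfrak{d}$.
   Context: With $m=0$, $T$ is the set of rooted trees (all vertices of the single color $0$): the empty tree $\emptyset$ and all $\tau=[\tau_1,\dots,\tau_\kappa]_0$, $\kappa\ge0$, $\tau_j\in T\setminus\{\emptyset\}$ unordered (new root joined to the roots of the $\tau_j$; $\bullet_0$ if $\kappa=0$). Order: $\rho(\emptyset)=0$, $\rho([\tau_1,\dots,\tau_\kappa]_0)=1+\sum_j\rho(\tau_j)$ (the number of vertices). $U_f$: trees $u=[\tau_1,\dots,\tau_\kappa]_f$, $\kappa\ge0$, $\tau_j\in T\setminus\{\emptyset\}$, $\rho(u)=\sum_j\rho(\tau_j)$, $\mathfrak{g}'(u)=\max_j\mathfrak{g}(\tau_j)$. Maxima over empty sets are $0$. $\mathfrak{h}(\emptyset)=0$, $\mathfrak{h}(\bullet_0)=1$, $\mathfrak{h}([\tau_1,\dots,\tau_\kappa]_0)=1+\max_j\mathfrak{h}(\tau_j)$; $\mathfrak{r}(\emptyset)=0$, $\mathfrak{r}(\bullet_0)=1$, $\mathfrak{r}([\tau_1]_0)=\mathfrak{r}(\tau_1)$,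 $\mathfrak{r}([\tau_1,\dots,\tau_\kappa]_0)=1+\max_j\mathfrak{r}(\tau_j)$ for $\kappa\ge2$; $\mathfrak{d}(\emptyset)=0$, $\mathfrak{d}(\bullet_0)=1$, $\mathfrak{d}([\tau_1,\dots,\tau_\kappa]_0)=M$ if exactly one $i$ has $\mathfrak{d}(\tau_i)=M:=\max_j\mathfrak{d}(\tau_j)$, and $M+1$ if at least two indices attain $M$. *)

(* Defs.v *)
From mathcomp Require Import all_boot.
Set Implicit Arguments. Unset Strict Implicit. Unset Printing Implicit Defensive.

(* Nonempty rooted trees with all vertices of the single color 0 (m = 0):
   [Node [:: t1; ...; tk]] is [t1,...,tk]_0 (new root joined to the roots of
   the t_j); [Node [::]] is the single vertex bullet_0.  The children are
   stored as a list, but every function below is symmetric in the children,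
   so this faithfully represents unordered trees. *)
Inductive rtree : Type := Node of seq rtree.

(* The set T: the empty tree (None) or a nonempty tree (Some t). *)
Definition Ttree := option rtree.

Definition maxl (s : seq nat) : nat := foldr maxn 0 s.

Fixpoint rho (t : rtree) : nat :=
  match t with Node l => 1 + sumn (map rho l) end.

Fixpoint hgt (t : rtree) : nat :=
  match t with Node l => 1 + maxl (map hgt l) end.

Fixpoint rfun (t : rtree) : nat :=
  match t with
  | Node [::] => 1
  | Node [:: t1] => rfun t1
  | Node l => 1 + maxl (map rfun l)
  end.

Fixpoint dfun (t : rtree) : nat :=
  match t with
  | Node [::] => 1
  | Node l =>
      let vs := map dfun l in
      let M := maxl vs in
      if 2 <= count (pred1 M) vs then M.+1 else M
  end.

Definition rhoT (t : Ttree) : nat := if t is Some t' then rho t' else 0.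
Definition hT (t : Ttree) : nat := if t is Some t' then hgt t' else 0.
Definition rT (t : Ttree) : nat := if t is Some t' then rfun t' else 0.
Definition dT (t : Ttree) : nat := if t is Some t' then dfun t' else 0.

(* U_f: u = [t1,...,tk]_f with nonempty t_j; represented by its list of
   children.  rho(u) = sum rho(t_j), g'(u) = max g(t_j). *)
Definition Uf := seq rtree.
Definition rhoU (u : Uf) : nat := sumn (map rho u).
Definition hU' (u : Uf) : nat := maxl (map hgt u).
Definition rU' (u : Uf) : nat := maxl (map rfun u).
Definition dU' (u : Uf) : nat := maxl (map dfun u).

(* Main.v *)
Require Import Defs.
From mathcomp Require Import all_boot.
From mathcomp Require Import zify.
Set Implicit Arguments. Unset Strict Implicit.

Definition Fall (P : rtree -> Prop) (l : seq rtree) : Prop :=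
  foldr (fun x acc => P x /\ acc) True l.

Fixpoint rtree_ind2 (P : rtree -> Prop) (H : forall l, Fall P l -> P (Node l))
  (t : rtree) : P t :=
  match t with Node l => H l ((fix F (l : seq rtree) : Fall P l :=
     match l return Fall P l with
     | [::] => I
     | x :: l' => conj (@rtree_ind2 P H x) (F l') end) l) end.

Lemma rho_ge1 t : 1 <= rho t.
Proof. by case: t => l /=. Qed.

Lemma maxl_sum (f g : rtree -> nat) l :
  Fall (fun x => f x <= g x) l -> maxl (map f l) <= sumn (map g l).
Proof.
elim: l => [|a l IH] //= [Ha Hl]. have := IH Hl. rewrite /maxl /= -/(maxl _).
lia.
Qed.

Lemma maxlA (f g : rtree -> nat) l :
  Fall (fun x => 2 * f x <= g x + 1) l -> 2 * maxl (map f l) <= sumn (map g l) + 1.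
Proof.
elim: l => [|a l IH] //= [Ha Hl]. have := IH Hl. rewrite /maxl /= -/(maxl _).
lia.
Qed.

Lemma maxlB (f : rtree -> nat) a b l :
  Fall (fun x => 2 * f x <= rho x + 1) (a :: b :: l) ->
  2 * maxl (map f (a :: b :: l)) <= sumn (map rho (a :: b :: l)).
Proof.
move=> [Ha Hl]. have := @maxlA f rho (b :: l) Hl. have := rho_ge1 a. have := rho_ge1 b.
rewrite /maxl /= -/(maxl _). lia.
Qed.

Lemma countC (f : rtree -> nat) l M :
  Fall (fun x => 2 ^ f x <= rho x + 1) l ->
  count (pred1 M) (map f l) * (2 ^ M - 1) <= sumn (map rho l).
Proof.
elim: l => [|a l IH] //= [Ha Hl]. have := IH Hl.
case: eqP => [<-|_] /=; lia.
Qed.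

Lemma maxl_cons a s : maxl (a :: s) = maxn a (maxl s).
Proof. by []. Qed.

Lemma maxl_in s : s != [::] -> maxl s \in s.
Proof.
elim: s => [|a s IH] // _. rewrite maxl_cons inE.
case: s IH => [|b s] IH; first by rewrite /maxl /= maxn0 eqxx.
move: (IH isT). set m := maxl (b :: s) => Hm.
case: (leqP a m) => h; first by rewrite Hm orbT.
by rewrite eqxx.
Qed.

Lemma count_ge1 (f : rtree -> nat) l : 0 < size l ->
  1 <= count (pred1 (maxl (map f l))) (map f l).
Proof.
move=> hl. rewrite -has_count. apply/hasP. exists (maxl (map f l)) => //.
  apply: maxl_in; by case: l hl.
by rewrite /= eqxx.
Qed.

Lemma hgt_le t : hgt t <= rho t.
Proof.
elim/rtree_ind2: t => l H /=. have := maxl_sum H. lia.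
Qed.

Lemma rfun_le t : 2 * rfun t <= rho t + 1.
Proof.
elim/rtree_ind2: t => l H. case: l H => [|a [|b l]] //=.
  move=> [Ha _]. lia.
move=> H. have := maxlB H. rewrite /=. lia.
Qed.

Lemma dfun_le t : 2 ^ dfun t <= rho t + 1.
Proof.
elim/rtree_ind2: t => l H. case: l H => [|a l] // H.
have E : dfun (Node (a :: l)) = (if 2 <= count (pred1 (maxl (map dfun (a :: l)))) (map dfun (a :: l))
   then (maxl (map dfun (a :: l))).+1 else maxl (map dfun (a :: l))) by [].
have R : rho (Node (a :: l)) = 1 + sumn (map rho (a :: l)) by [].
rewrite E R.
have hc := countC (maxl (map dfun (a :: l))) H.
have h1 := count_ge1 dfun (isT : 0 < size (a :: l)).
have hp := expn_gt0 2 (maxl (map dfun (a :: l))).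
move: hc h1 hp.
set c := count _ _. set M := maxl _. set S := sumn _.
case: ifP => h2 /= hc h1 hp; rewrite ?expnS; nia.
Qed.

Lemma FallT (P : rtree -> Prop) l : (forall x, P x) -> Fall P l.
Proof. by move=> H; elim: l => //= a l IH; split. Qed.

Theorem mainTheorem11 :
  (forall (k : nat) (tau : Ttree), 1 <= k ->
     [/\ hT tau = k -> k <= rhoT tau,
         rT tau = k -> 2 * k - 1 <= rhoT tau
       & dT tau = k -> 2 ^ k - 1 <= rhoT tau]) /\
  (forall (k : nat) (u : Uf), 1 <= k ->
     [/\ hU' u = k -> k <= rhoU u,
         rU' u = k -> 2 * k - 1 <= rhoU u
       & dU' u = k -> 2 ^ k - 1 <= rhoU u]).
Proof.
split.
  move=> k [t|] hk; split => /= Hk; subst k.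
  - exact: hgt_le.
  - have := rfun_le t. lia.
  - have := dfun_le t. lia.
  - by [].
  - by [].
  - by [].
move=> k u hk; split => <-.
- apply: maxl_sum. apply: FallT => x. exact: hgt_le.
- have := maxlA (FallT u rfun_le). rewrite /rU' /rhoU. lia.
- rewrite /dU' /rhoU. case: u => [|a l] //.
  have := countC (maxl (map dfun (a :: l))) (FallT (a :: l) dfun_le).
  have := count_ge1 dfun (isT : 0 < size (a :: l)). nia.
Qed.
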